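(* In the $\beta$-model with true parameter satisfying $\beta_1=\cdots=\beta_r$, for a fixed positive integer $r$, $$\|W_{22}-\widetilde W_{22}\|_{\max}\lesssim\frac{b_n^6}{n^3c_n^5},$$ where $W_{22}$ is the bottom-right $(n-r)\times(n-r)$ block of $W=V^{-1}-S$ and $\widetilde W_{22}$ is the bottom-right $(n-r)\times(n-r)$ block of $\widetilde W=\widetilde V^{-1}-\widetilde S$.
   Context: $\beta$-model: $a_{ij}=a_{ji}\in\{0,1\}$, $1\le i<j\le n$, independent with $P(a_{ij}=1)=e^{\beta_i+\beta_j}/(1+e^{\beta_i+\beta_j})$, $a_{ii}=0$; $d_i=\sum_{j\ne i}a_{ij}$. $V=(v_{ij})$ with $v_{ij}=e^{\beta_i+\beta_j}/(1+e^{\beta_i+\beta_j})^2$ ($i\ne j$), $v_{ii}=\sum_{j\ne i}v_{ij}$; $S=\mathrm{diag}(1/v_{11},\dots,1/v_{nn})$. $\widetilde{\mathbf d}=(\sum_{i=1}^rd_i,d_{r+1},\dots,d_n)^\top$, $\widetilde V=(\tilde v_{ij})$ its covariance matrix, $\widetilde S=\mathrm{diag}(1/\tilde v_{11},1/v_{r+1,r+1},\dots,1/v_{nn})$. $\|J\|_{\max}=\max_{i,j}|J_{ij}|$. $b_n=\max_{i\neq j}(1+e^{\beta_i+\beta_j})^2/e^{\beta_i+\beta_j}$, $c_n=\min_{i\ne j}(\cdot)$. $x\lesssim y$ means $x\le Cy$ for a constant $C$ independent of $n$. *)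

(* Defs.v *)
From HB Require Import structures.
From mathcomp Require Import all_boot all_order all_algebra.
From mathcomp Require Import reals.
From mathcomp Require Import sequences exp.
Set Implicit Arguments. Unset Strict Implicit. Unset Printing Implicit Defensive.
Import Order.TTheory GRing.Theory Num.Theory.
Local Open Scope ring_scope.

Section BetaModel.
Variables (R : realType) (n : nat) (beta : 'I_n -> R).

Definition vij (i j : 'I_n) : R :=
  expR (beta i + beta j) / (1 + expR (beta i + beta j)) ^+ 2.

Definition Vmat : 'M[R]_n :=
  \matrix_(i, j) if i == j then \sum_(k < n | k != i) vij i k else vij i j.

Definition Smat : 'M[R]_n :=
  \matrix_(i, j) if i == j then (Vmat i i)^-1 else 0.

Definition Wmat : 'M[R]_n := invmx Vmat - Smat.

Definition bn : R :=
  \big[Num.max/0]_(i < n) \big[Num.max/0]_(j < n | j != i) (vij i j)^-1.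

(* c_n = min_{i<>j} 1/v_ij (the default bn is an upper bound for all terms) *)
Definition cn : R :=
  \big[Num.min/bn]_(i < n) \big[Num.min/bn]_(j < n | j != i) (vij i j)^-1.

Variable r : nat.

(* Aggregation matrix A with  d~ = A d,
   d~_0 = sum_{i<r} d_i,  d~_k = d_{r+k-1} for k >= 1 (0-based indices). *)
Definition Aggr : 'M[R]_((n - r).+1, n) :=
  \matrix_(k, j) if (k == 0 :> nat)%N then ((j < r)%N)%:R
                 else ((j == r + k - 1 :> nat)%N)%:R.

(* Covariance matrix of d~ : Cov(A d) = A Cov(d) A^T = A V A^T. *)
Definition Vtmat : 'M[R]_((n - r).+1) := Aggr *m Vmat *m Aggr^T.

Definition Stmat : 'M[R]_((n - r).+1) :=
  \matrix_(i, j) if i == j then (Vtmat i i)^-1 else 0.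

Definition Wtmat : 'M[R]_((n - r).+1) := invmx Vtmat - Stmat.

End BetaModel.

(* Main.v *)
Require Import Defs.
From HB Require Import structures.
From mathcomp Require Import all_boot all_order all_algebra.
From mathcomp Require Import reals.
From mathcomp Require Import sequences exp.
From mathcomp Require Import fingroup perm zify ring lra.
Import Order.TTheory GRing.Theory Num.Theory.
Local Open Scope ring_scope.
Lemma vij_gt0 (R : realType) n (beta : 'I_n -> R) i j : 0 < vij beta i j.
Proof.
rewrite /vij divr_gt0 ?expR_gt0 // exprn_gt0 // ltr_wpDr ?expR_gt0 //.
by apply: ltW; rewrite expR_gt0.
Qed.

Lemma vijC (R : realType) n (beta : 'I_n -> R) i j : vij beta i j = vij beta j i.
Proof. by rewrite /vij addrC. Qed.

Lemma VmatE (R : realType) n (beta : 'I_n -> R) i j :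
  Vmat beta i j = if i == j then \sum_(k < n | k != i) vij beta i k else vij beta i j.
Proof. by rewrite mxE. Qed.

Lemma VmatC (R : realType) n (beta : 'I_n -> R) i j : Vmat beta i j = Vmat beta j i.
Proof.
rewrite !VmatE eq_sym; case: eqP => [->|_] //; exact: vijC.
Qed.

Lemma sum_val1 (R : realType) n (f : 'I_n -> R) (j0 : 'I_n) c :
  val j0 = c -> \sum_(j < n | (j : nat) == c) f j = f j0.
Proof.
move=> h; apply: (big_pred1 j0) => j /=; by rewrite -h -val_eqE.
Qed.

Lemma AggrE (R : realType) n r k j :
  Aggr R n r k j = if (k == 0 :> nat) then ((j < r)%N)%:R
                   else ((j == r + k - 1 :> nat)%N)%:R.
Proof. by rewrite mxE. Qed.

Lemma L1 (R : realType) n r (k : 'I_(n - r).+1) (f : 'I_n -> R) :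
  \sum_j Aggr R n r k j * f j =
  if (k == 0 :> nat) then \sum_(j < n | (j < r)%N) f j
  else \sum_(j < n | (j : nat) == (r + k - 1)%N) f j.
Proof.
case: ifP => hk; rewrite [RHS]big_mkcond; apply: eq_bigr => j _; rewrite AggrE hk.
  by case: (j < r)%N; rewrite ?mul1r ?mul0r.
by case: (_ == _); rewrite ?mul1r ?mul0r.
Qed.
Lemma L2 (R : realType) n r (hr : (0 < r)%N) (a : 'I_n) (g : 'I_(n - r).+1 -> R) :
  \sum_k Aggr R n r k a * g k =
  if (a < r)%N then g ord0 else g (inord (a - r + 1)).
Proof.
case: ifP => ha.
  rewrite (bigD1 ord0) //= big1 ?addr0.
    by rewrite AggrE /= ha mul1r.
  move=> k hk; rewrite AggrE.
  have hk0 : (k == 0 :> nat) = false.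
    by apply/negbTE; move: hk; apply: contra => /eqP h; apply/eqP/val_inj.
  rewrite hk0.
  have -> : ((a:nat) == r + k - 1)%N = false by apply/negbTE/eqP; lia.
  by rewrite mul0r.
have hlt : (a - r + 1 < (n - r).+1)%N by have := ltn_ord a; lia.
rewrite (bigD1 (inord (a - r + 1))) //= big1 ?addr0.
  rewrite AggrE inordK //.
  have -> : (a - r + 1 == 0)%N = false by apply/negbTE/eqP; lia.
  have -> : ((a:nat) == r + (a - r + 1) - 1)%N = true by apply/eqP; lia.
  by rewrite mul1r.
move=> k hk; rewrite AggrE.
case: ifP => hk0; first by rewrite ha mul0r.
have -> : ((a:nat) == r + k - 1)%N = false.
  apply/negbTE/eqP => h; move: hk; rewrite -val_eqE /= inordK //; lia.
by rewrite mul0r.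
Qed.

Definition Mavg (R : realType) n r : 'M[R]_((n - r).+1, n) :=
  \matrix_(k, j) ((if (k == 0 :> nat) then (r%:R)^-1 else 1) * Aggr R n r k j).

Lemma L1M (R : realType) n r (k : 'I_(n - r).+1) (f : 'I_n -> R) :
  \sum_j Mavg R n r k j * f j =
  if (k == 0 :> nat) then (r%:R)^-1 * \sum_(j < n | (j < r)%N) f j
  else \sum_(j < n | (j : nat) == (r + k - 1)%N) f j.
Proof.
rewrite (eq_bigr (fun j => (if (k == 0 :> nat) then (r%:R)^-1 else 1) * (Aggr R n r k j * f j))); last first.
  by move=> j _; rewrite mxE mulrA.
rewrite -mulr_sumr L1; case: ifP => //; by rewrite mul1r.
Qed.

Definition Qm (R : realType) n r : 'M[R]_n := (Aggr R n r)^T *m Mavg R n r.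

Lemma Qe (R : realType) n r (hr : (0 < r)%N) (a b : 'I_n) :
  Qm R n r a b = if (a < r)%N then ((b < r)%N)%:R / r%:R else ((a == b)%N)%:R.
Proof.
rewrite /Qm mxE (eq_bigr (fun k => Aggr R n r k a * Mavg R n r k b)); last first.
  by move=> k _; rewrite mxE.
rewrite L2 //; case: ifP => ha; rewrite mxE AggrE /=.
  by rewrite mulrC.
have hlt : (a - r + 1 < (n - r).+1)%N by have := ltn_ord a; lia.
rewrite inordK //.
have -> : (a - r + 1 == 0)%N = false by apply/negbTE/eqP; lia.
rewrite mul1r; congr (_%:R).
move: ha => /negbT; rewrite -leqNgt => ha.
case: (_ =P _) => h1; case: (a =P b) => h2 //.
  by exfalso; apply: h2; apply: val_inj => /=; lia.
by exfalso; apply: h1; rewrite -h2; lia.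
Qed.

Lemma Qe2 (R : realType) n r (hr : (0 < r)%N) (a b : 'I_n) :
  Qm R n r a b = if (b < r)%N then ((a < r)%N)%:R / r%:R else ((a == b)%N)%:R.
Proof.
rewrite Qe //.
case: (ltnP a r) => ha; case: (ltnP b r) => hb //.
- have -> : (a == b) = false by apply/negbTE/eqP => h; subst; lia.
  by rewrite mul0r.
- have -> : (a == b) = false by apply/negbTE/eqP => h; subst; lia.
  by rewrite mul0r.
Qed.
Lemma ord_rk n r (hr : (0 < r)%N) (hrn : (r < n)%N) (k : 'I_(n - r).+1) :
  (r + k - 1 < n)%N.
Proof. have := ltn_ord k; lia. Qed.

Lemma sum_const_lt (R : realType) n r (hrn : (r < n)%N) (c : R) :
  \sum_(j < n | (j < r)%N) c = c *+ r.
Proof.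
rewrite -(big_ord_widen n (fun=> c) (ltnW hrn)).
by rewrite sumr_const card_ord.
Qed.

Lemma AQ (R : realType) n r (hr : (0 < r)%N) (hrn : (r < n)%N) :
  Aggr R n r *m Qm R n r = Aggr R n r.
Proof.
have hr0 : (r%:R : R) != 0 by rewrite pnatr_eq0 -lt0n.
apply/matrixP => k b; rewrite mxE L1 AggrE; case: ifP => hk.
  rewrite (eq_bigr (fun _ => ((b < r)%N)%:R / r%:R)); last first.
    by move=> j hj; rewrite Qe // hj.
  by rewrite sum_const_lt // -(mulr_natr (((b < r)%N)%:R / r%:R) r) divfK.
rewrite (@sum_val1 _ _ _ (Ordinal (@ord_rk n r hr hrn k))) // Qe //=.
have hk' : (0 < k)%N by rewrite lt0n hk.
have -> : (r + k - 1 < r)%N = false by apply/negbTE; rewrite -leqNgt; lia.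
by rewrite -val_eqE /= eq_sym.
Qed.

Lemma AMt (R : realType) n r (hr : (0 < r)%N) (hrn : (r < n)%N) :
  Aggr R n r *m (Mavg R n r)^T = 1%:M.
Proof.
have hr0 : (r%:R : R) != 0 by rewrite pnatr_eq0 -lt0n.
apply/matrixP => k l; rewrite [LHS]mxE.
rewrite (eq_bigr (fun j => Aggr R n r k j * Mavg R n r l j)); last by move=> j _; congr (_ * _); rewrite mxE.
rewrite L1 [RHS]mxE -val_eqE /=; case: ifP => hk.
  case hl: (l == 0 :> nat).
    rewrite (eq_bigr (fun _ => (r%:R : R)^-1)); last first.
      by move=> j hj; rewrite mxE AggrE hl hj /= mulr1.
    rewrite sum_const_lt // -(mulr_natr ((r%:R : R)^-1) r) mulVf //.
    by move/eqP: hk => ->; move/eqP: hl => ->.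
  rewrite big1; last first.
    move=> j hj; rewrite mxE AggrE hl.
    have -> : ((j : nat) == r + l - 1)%N = false.
      have hl' : (0 < l)%N by rewrite lt0n hl.
      by apply/negbTE/eqP; lia.
    by rewrite mulr0.
  move/eqP: hk => ->; rewrite eq_sym; have hl' : (0 < l)%N by rewrite lt0n hl.
  by case: eqP => //; lia.
have hk' : (0 < k)%N by rewrite lt0n hk.
rewrite (@sum_val1 _ _ _ (Ordinal (@ord_rk n r hr hrn k))) // mxE AggrE /=.
case: ifP => hl.
  have -> : (r + k - 1 < r)%N = false by apply/negbTE; rewrite -leqNgt; lia.
  by move/eqP: hl => ->; rewrite mulr0; case: eqP => //; lia.
have hl' : (0 < l)%N by rewrite lt0n hl.
rewrite mul1r; congr (_%:R).
by case: (_ =P _) => h1; case: (_ =P _) => h2 //; exfalso; lia.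
Qed.
Lemma Vperm (R : realType) n (beta : 'I_n -> R) r
  (hb : forall i j : 'I_n, (i < r)%N -> (j < r)%N -> beta i = beta j)
  (a c : 'I_n) (ha : (a < r)%N) (hc : (c < r)%N) (i j : 'I_n) :
  Vmat beta (tperm a c i) (tperm a c j) = Vmat beta i j.
Proof.
have hbt : forall x, beta (tperm a c x) = beta x.
  by move=> x; case: tpermP => [->|->|] //; apply: hb.
have hv : forall x y, vij beta (tperm a c x) (tperm a c y) = vij beta x y.
  by move=> x y; rewrite /vij !hbt.
rewrite !VmatE (inj_eq perm_inj); case: eqP => // _.
rewrite (reindex_inj (h := tperm a c) perm_inj) /=.
apply: eq_big => k; first by rewrite (inj_eq perm_inj).
by move=> _; rewrite hv.
Qed.

Lemma H1 (R : realType) n r (F : 'I_n -> R) :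
  \sum_(j < n) F j * (((j < r)%N)%:R / r%:R) = (\sum_(j < n | (j < r)%N) F j) / r%:R.
Proof.
rewrite mulr_suml [RHS]big_mkcond; apply: eq_bigr => j _.
by case: (j < r)%N; rewrite ?mul1r ?mul0r ?mulr0.
Qed.

Lemma H1' (R : realType) n r (F : 'I_n -> R) :
  \sum_(j < n) (((j < r)%N)%:R / r%:R) * F j = (\sum_(j < n | (j < r)%N) F j) / r%:R.
Proof. rewrite -H1; apply: eq_bigr => j _; exact: mulrC. Qed.

Lemma H2 (R : realType) n (F : 'I_n -> R) b :
  \sum_(j < n) F j * ((j == b)%:R) = F b.
Proof.
rewrite (bigD1 b) //= eqxx mulr1 big1 ?addr0 //.
by move=> j /negbTE ->; rewrite mulr0.
Qed.

Lemma H2' (R : realType) n (F : 'I_n -> R) a :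
  \sum_(j < n) ((a == j)%:R) * F j = F a.
Proof.
rewrite -(@H2 _ _ F a); apply: eq_bigr => j _; by rewrite mulrC eq_sym.
Qed.

Lemma VQ (R : realType) n (beta : 'I_n -> R) r (hr : (0 < r)%N) (hrn : (r < n)%N)
  (hb : forall i j : 'I_n, (i < r)%N -> (j < r)%N -> beta i = beta j) :
  Vmat beta *m Qm R n r = Qm R n r *m Vmat beta.
Proof.
have hr0 : (r%:R : R) != 0 by rewrite pnatr_eq0 -lt0n.
apply/matrixP => a b; rewrite !mxE.
have EL : \sum_(j < n) Vmat beta a j * Qm R n r j b =
   if (b < r)%N then (\sum_(j < n | (j < r)%N) Vmat beta a j) / r%:R else Vmat beta a b.
  case: ifP => hbr.
    by rewrite -H1; apply: eq_bigr => j _; rewrite Qe2 // hbr.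
  by rewrite -H2; apply: eq_bigr => j _; rewrite Qe2 // hbr.
have ER : \sum_(j < n) Qm R n r a j * Vmat beta j b =
   if (a < r)%N then (\sum_(j < n | (j < r)%N) Vmat beta j b) / r%:R else Vmat beta a b.
  case: ifP => har.
    by rewrite -H1'; apply: eq_bigr => j _; rewrite Qe // har.
  by rewrite -(@H2' _ _ (fun j => Vmat beta j b) a); apply: eq_bigr => j _; rewrite Qe // har.
rewrite EL ER; case: (ltnP a r) => ha; case: (ltnP b r) => hbr //.
- congr (_ / _).
  rewrite [RHS](reindex_inj (h := tperm a b) perm_inj) /=.
  apply: eq_big => c.
    by case: tpermP => [->|->|] //; rewrite ha hbr.
  move=> _; have e := @Vperm _ _ _ _ hb a b ha hbr c a.
  by rewrite tpermL in e; rewrite e VmatC.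
- rewrite (eq_bigr (fun _ => Vmat beta a b)); last first.
    move=> c hc; have e := @Vperm _ _ _ _ hb a c ha hc a b.
    rewrite tpermL tpermD in e; first by rewrite e.
      by apply/eqP => h; subst; lia.
    by apply/eqP => h; subst; lia.
  by rewrite sum_const_lt // -(mulr_natr (Vmat beta a b) r) mulfK.
- rewrite (eq_bigr (fun _ => Vmat beta a b)); last first.
    move=> c hc; have e := @Vperm _ _ _ _ hb b c hbr hc a b.
    rewrite tpermL tpermD in e; first by rewrite e.
      by apply/eqP => h; subst; lia.
    by apply/eqP => h; subst; lia.
  by rewrite sum_const_lt // -(mulr_natr (Vmat beta a b) r) mulfK.
Qed.
Lemma swap_off (R : realType) n (F : 'I_n -> 'I_n -> R) :
  \sum_(a < n) \sum_(b < n | b != a) F a b = \sum_(a < n) \sum_(b < n | b != a) F b a.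
Proof.
under eq_bigr => a _ do rewrite big_mkcond.
under [RHS]eq_bigr => a _ do rewrite big_mkcond.
rewrite exchange_big; apply: eq_bigr => a _; apply: eq_bigr => b _.
by rewrite eq_sym.
Qed.

Lemma zero3 (R : realType) n (y : 'I_n -> R)
  (Hp : forall a b, b != a -> y a + y b = 0) (a b c : 'I_n) :
  b != a -> c != a -> c != b -> y a = 0.
Proof.
move=> hba hca hcb.
have h1 := Hp a b hba; have h2 := Hp a c hca; have h3 := Hp b c hcb.
lra.
Qed.

Lemma Vker (R : realType) n (beta : 'I_n -> R) (hn : (2 < n)%N) (x : 'rV[R]_n) :
  x *m Vmat beta = 0 -> x = 0.
Proof.
move=> hx.
pose y := fun j => x 0 j.
have hcol : forall b, \sum_a y a * Vmat beta a b = 0.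
  by move=> b; have := congr1 (fun M : 'rV_n => M 0 b) hx; rewrite /= !mxE.
have hq : \sum_b y b * (\sum_a y a * Vmat beta a b) = 0.
  by rewrite big1 // => b _; rewrite hcol mulr0.
pose v := vij beta.
have Einner : forall b, \sum_a y a * Vmat beta a b =
   y b * (\sum_(k < n | k != b) v b k) + \sum_(a < n | a != b) v a b * y a.
  move=> b; rewrite (bigD1 b) //= VmatE eqxx; congr (_ + _).
  by apply: eq_bigr => a hab; rewrite VmatE (negbTE hab) mulrC.
pose D := \sum_(a < n) \sum_(b < n | b != a) v a b * y a ^+ 2.
pose X := \sum_(a < n) \sum_(b < n | b != a) v a b * (y a * y b).
have hqDX : \sum_b y b * (\sum_a y a * Vmat beta a b) = D + X.
  rewrite /D /X -big_split /=; apply: eq_bigr => b _.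
  rewrite Einner mulrDr; congr (_ + _).
    rewrite mulrA mulr_sumr; apply: eq_bigr => k _; ring.
  rewrite mulr_sumr; apply: eq_bigr => a _; rewrite /v (@vijC _ _ beta a b); ring.
pose T := \sum_(a < n) \sum_(b < n | b != a) v a b * (y a + y b) ^+ 2.
have hT : T = 2 * (D + X).
  have -> : T = D + \sum_(a < n) \sum_(b < n | b != a) v a b * y b ^+ 2 + 2 * X.
    rewrite /T /D /X mulr_sumr -!big_split /=; apply: eq_bigr => a _.
    rewrite mulr_sumr -!big_split /=; apply: eq_bigr => b _; ring.
  rewrite (@swap_off _ _ (fun a b => v a b * y b ^+ 2)) /=.
  have -> : \sum_(a < n) \sum_(b < n | b != a) v b a * y a ^+ 2 = D.
    by apply: eq_bigr => a _; apply: eq_bigr => b _; rewrite /v vijC.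
  lra.
have T0 : T = 0 by rewrite hT -hqDX hq mulr0.
have Hp : forall a b, b != a -> y a + y b = 0.
  move=> a b hab.
  have ge0 : forall a b, 0 <= v a b * (y a + y b) ^+ 2.
    by move=> a' b'; rewrite mulr_ge0 ?sqr_ge0 // ltW // vij_gt0.
  have Ga : \sum_(b < n | b != a) v a b * (y a + y b) ^+ 2 = 0.
    apply: (psumr_eq0P _ T0) => // a' _; exact: sumr_ge0.
  have := psumr_eq0P (fun b _ => ge0 a b) Ga hab.
  move/eqP; rewrite mulf_eq0 (negbTE (lt0r_neq0 (@vij_gt0 _ _ beta a b))) /=.
  by rewrite sqrf_eq0 => /eqP.
apply/rowP => j; rewrite [RHS]mxE.
have o0 : (0 < n)%N by lia.
have o1 : (1 < n)%N by lia.
pose i0 := Ordinal o0; pose i1 := Ordinal o1; pose i2 := Ordinal hn.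
have d10 : i1 != i0 by rewrite -val_eqE.
have d20 : i2 != i0 by rewrite -val_eqE.
have d21 : i2 != i1 by rewrite -val_eqE.
case: (j =P i0) => [->|h0].
  by apply: (@zero3 _ _ y Hp _ _ _ d10 d20 d21).
case: (j =P i1) => [->|h1].
  have d01 : i0 != i1 by rewrite eq_sym.
  by apply: (@zero3 _ _ y Hp _ _ _ d01 d21 d20).
have e0 : i0 != j by apply/eqP => h; apply: h0; rewrite h.
have e1 : i1 != j by apply/eqP => h; apply: h1; rewrite h.
by apply: (@zero3 _ _ y Hp _ _ _ e0 e1 d10).
Qed.

Lemma Vunit (R : realType) n (beta : 'I_n -> R) (hn : (2 < n)%N) :
  Vmat beta \in unitmx.
Proof.
rewrite -row_free_unit -kermx_eq0; apply/eqP/matrixP => a b.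
have h : row a (kermx (Vmat beta)) *m Vmat beta = 0 by rewrite -row_mul mulmx_ker row0.
have := congr1 (fun M : 'rV_n => M 0 b) (@Vker _ _ beta hn _ h).
by rewrite /= !mxE.
Qed.
Lemma invVt (R : realType) n (beta : 'I_n -> R) r (hr : (0 < r)%N) (hrn : (r < n)%N)
  (hn : (2 < n)%N)
  (hb : forall i j : 'I_n, (i < r)%N -> (j < r)%N -> beta i = beta j) :
  invmx (Vtmat beta r) = Mavg R n r *m invmx (Vmat beta) *m (Mavg R n r)^T.
Proof.
have hVY : Vtmat beta r *m (Mavg R n r *m invmx (Vmat beta) *m (Mavg R n r)^T) = 1%:M.
  rewrite /Vtmat !mulmxA.
  rewrite -(mulmxA (Aggr R n r *m Vmat beta)).
  have -> : (Aggr R n r)^T *m Mavg R n r = Qm R n r by [].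
  rewrite -(mulmxA (Aggr R n r)) VQ // mulmxA AQ //.
  rewrite -(mulmxA (Aggr R n r) (Vmat beta)) mulmxV ?Vunit // mulmx1 AMt //.
have hu := (mulmx1_unit hVY).1.
by rewrite -[LHS]mulmx1 -hVY mulKmx.
Qed.

Lemma bn_ge0 (R : realType) n (beta : 'I_n -> R) : 0 <= bn beta.
Proof.
rewrite /bn; elim/big_ind: _ => //.
  by move=> x y hx _; rewrite le_max hx.
move=> i _; elim/big_ind: _ => //.
  by move=> x y hx _; rewrite le_max hx.
by move=> j _; rewrite invr_ge0 ltW // (@vij_gt0 _ _ beta).
Qed.

Lemma cn_ge0 (R : realType) n (beta : 'I_n -> R) : 0 <= cn beta.
Proof.
have hb := @bn_ge0 _ _ beta.
rewrite /cn; elim/big_ind: _ => //.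
  by move=> x y hx hy; rewrite le_min hx hy.
move=> i _; elim/big_ind: _ => //.
  by move=> x y hx hy; rewrite le_min hx hy.
by move=> j _; rewrite invr_ge0 ltW // (@vij_gt0 _ _ beta).
Qed.

Lemma Yentry (R : realType) n r (hr : (0 < r)%N) (hrn : (r < n)%N) (X : 'M[R]_n)
  (i j : 'I_n) (hi : (r <= i)%N) (hj : (r <= j)%N) :
  (Mavg R n r *m X *m (Mavg R n r)^T) (inord (i - r).+1) (inord (j - r).+1) = X i j.
Proof.
have hki : ((i - r).+1 < (n - r).+1)%N by have := ltn_ord i; lia.
have hkj : ((j - r).+1 < (n - r).+1)%N by have := ltn_ord j; lia.
rewrite mxE.
rewrite (eq_bigr (fun a => Mavg R n r (inord (j - r).+1) a *
            (Mavg R n r *m X) (inord (i - r).+1) a)); last first.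
  by move=> a _; rewrite [(_^T) _ _]mxE mulrC.
rewrite L1M inordK //= (@sum_val1 _ _ _ j); last by rewrite /=; lia.
rewrite mxE L1M inordK //= (@sum_val1 _ _ _ i) //= ; lia.
Qed.

Lemma Vtdiag (R : realType) n (beta : 'I_n -> R) r (hr : (0 < r)%N) (hrn : (r < n)%N)
  (i : 'I_n) (hi : (r <= i)%N) :
  Vtmat beta r (inord (i - r).+1) (inord (i - r).+1) = Vmat beta i i.
Proof.
have hki : ((i - r).+1 < (n - r).+1)%N by have := ltn_ord i; lia.
rewrite /Vtmat mxE.
rewrite (eq_bigr (fun a => Aggr R n r (inord (i - r).+1) a *
            (Aggr R n r *m Vmat beta) (inord (i - r).+1) a)); last first.
  by move=> a _; rewrite [(_^T) _ _]mxE mulrC.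
rewrite L1 inordK //= (@sum_val1 _ _ _ i); last by rewrite /=; lia.
rewrite mxE L1 inordK //= (@sum_val1 _ _ _ i) //= ; lia.
Qed.

Theorem lemma13 (R : realType) (r : nat) (hr : (0 < r)%N) :
  exists C : R, exists N : nat, 0 < C /\
    forall (n : nat) (beta : 'I_n -> R),
      (N <= n)%N -> (r < n)%N ->
      (forall i j : 'I_n, (i < r)%N -> (j < r)%N -> beta i = beta j) ->
      forall i j : 'I_n, (r <= i)%N -> (r <= j)%N ->
        `| Wmat beta i j
           - Wtmat beta r (inord (i - r).+1) (inord (j - r).+1) |
        <= C * (bn beta ^+ 6 / (n%:R ^+ 3 * cn beta ^+ 5)).
Proof.
exists 1, 3%N; split; first exact: ltr01.
move=> n beta hN hrn hb i j hi hj.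
have hn : (2 < n)%N by lia.
have hki : ((i - r).+1 < (n - r).+1)%N by have := ltn_ord i; lia.
have hkj : ((j - r).+1 < (n - r).+1)%N by have := ltn_ord j; lia.
have key : Wmat beta i j = Wtmat beta r (inord (i - r).+1) (inord (j - r).+1).
  rewrite /Wmat /Wtmat invVt // [LHS]mxE [RHS]mxE Yentry //.
  congr (_ + _); rewrite [LHS]mxE [RHS]mxE; congr (- _); rewrite [LHS]mxE [RHS]mxE.
  have e : (inord (i - r).+1 == inord (j - r).+1 :> 'I_(n - r).+1) = (i == j).
    rewrite -[RHS]val_eqE -val_eqE /= !inordK //.
    by case: eqP => h1; case: eqP => h2 //; exfalso; lia.
  rewrite e; case: eqP => // ->.
  by rewrite Vtdiag.
rewrite key subrr normr0 mul1r.
apply: divr_ge0; first by rewrite exprn_ge0 // bn_ge0.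
by rewrite mulr_ge0 // exprn_ge0 // cn_ge0.
Qed.
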